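(* Let $d,n\in\mathbb{N}$ be such that $h_c=h_c(d,n)$ is finite. For every $\epsilon\in(0,1]$ there exists $\gamma>0$ depending only on $\epsilon,d,n$ such that the following holds. Let $B$ be an axis-parallel box in $\mathbb{R}^d$ and $S$ a set of $m\ge h_c$ points in $\mathbb{R}^d$ such that at least $\epsilon m$ points of $S$ cannot be covered by any $n$ translated copies of $B$. Let $0<\delta\le 1$. If one independently samples $\frac{1}{\gamma}\ln\frac{1}{\delta}$ sets, each a uniformly random $h_c$-element subset of $S$, then with probability at least $1-\delta$ some sampled set cannot be covered by any $n$ translated copies of $B$.
   Context: An axis-parallel box in $\mathbb{R}^d$ is a set $[\alpha_1,\beta_1]\times\dots\times[\alpha_d,\beta_d]$. ''At least $\epsilon m$ points of $S$ cannot be covered by any $n$ translated copies of $B$'' means that for any $n$ translates of $B$ at least $\epsilon m$ points of $S$ lie outside their union. A family is $n$-pierceable if some set of at most $n$ points meets every member. Given families $\mathcal{F}_1,\dots,\mathcal{F}_m$, a colorful $t$-tuple is $(C_1,\dots,C_t)$ with $C_j\in\mathcal{F}_{i_j}$ for pairwise distinct $i_j$. $h_c(d,n)$ denotes the smallest positive integer $h$ such that whenever $\mathcal{F}_1,\dots,\mathcal{F}_h$ are collections of axis-parallel boxes in $\mathbb{R}^d$ with every colorful $h$-tuple $n$-pierceable, some $\mathcal{F}_i$ is $n$-pierceable. *)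

(* Defs.v *)
From Stdlib Require Import Reals.
From mathcomp Require Import all_boot.
From mathcomp Require Import boolp.

Set Implicit Arguments.
Unset Strict Implicit.
Unset Printing Implicit Defensive.
Local Open Scope R_scope.

Definition point (d : nat) := 'I_d -> R.

Record box (d : nat) := Box {
  lo : 'I_d -> R;
  hi : 'I_d -> R;
  lo_le_hi : forall i, (Rle (lo i) (hi i)) }.

Definition in_box d (B : box d) (x : point d) : Prop :=
  forall i, (lo B i <= x i <= hi B i).

Definition in_translate d (B : box d) (t : point d) (x : point d) : Prop :=
  forall i, (lo B i + t i <= x i <= hi B i + t i).

(* A family of boxes (a predicate on boxes) is n-pierceable: some set of at
   most n points (given as n points, repetitions allowed) meets every member. *)
Definition pierceable d (n : nat) (F : box d -> Prop) : Prop :=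
  exists q : 'I_n -> point d, forall C, F C -> exists j, in_box C (q j).

(* A colorful h-tuple uses
   all h distinct families, i.e. is a choice c i in F_i for every i. *)
Definition hc_property (d n h : nat) : Prop :=
  (0 < h)%N /\
  forall F : 'I_h -> box d -> Prop,
    (forall c : 'I_h -> box d, (forall i, F i (c i)) ->
       pierceable n (fun C => exists i, C = c i)) ->
    exists i, pierceable n (F i).

(* h = h_c(d,n), and in particular h_c(d,n) is finite. *)
Definition is_hc (d n h : nat) : Prop :=
  hc_property d n h /\ forall h', hc_property d n h' -> (h <= h')%N.

Definition coverable d n (B : box d) m (p : 'I_m -> point d) (A : {set 'I_m}) : Prop :=
  exists t : 'I_n -> point d, forall i, i \in A -> exists j, in_translate B (t j) (p i).

Definition n_uncovered d n (B : box d) m (p : 'I_m -> point d) (t : 'I_n -> point d) : nat :=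
  #|[set i : 'I_m | `[< ~ (exists j, in_translate B (t j) (p i)) >]]|.

(* Sample space: k independent uniformly random h-element subsets of S
   (S indexed by 'I_m): all k-tuples of h-subsets, uniformly. *)
Definition samples (k h m : nat) : {set {ffun 'I_k -> {set 'I_m}}} :=
  [set w : {ffun 'I_k -> {set 'I_m}} | [forall j, #|w j| == h]].

Definition prob_some_uncoverable d n (B : box d) m (p : 'I_m -> point d) (k h : nat) : R :=
  (INR #|[set w in samples k h m | `[< exists j, ~ coverable n B p (w j) >]]|
   / INR #|samples k h m|).

(* Main.v *)
Require Import Defs.
From Stdlib Require Import Reals Lra Classical ZArith.
From mathcomp Require Import all_boot.
From mathcomp Require Import boolp zify.
Set Implicit Arguments.
Unset Strict Implicit.
Lemma ffact_le_exp m h : m ^_ h <= m ^ h.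
Proof.
elim: h m => [|h IH] m //; rewrite ffactnS expnS leq_mul //.
apply: leq_trans (IH _) _; case: h {IH} => [|h]; first by rewrite !expn0.
by rewrite leq_exp2r // leq_pred.
Qed.

Lemma exp_le_ffact r h : (r - h) ^ h <= r ^_ h.
Proof.
elim: h r => [|h IH] r //; rewrite ffactnS expnS.
apply: leq_mul; first exact: leq_subr.
apply: leq_trans (IH _); by rewrite -subn1 -subnDA add1n.
Qed.

Lemma bin_le_exp m h : 'C(m, h) <= m ^ h.
Proof.
apply: leq_trans (ffact_le_exp m h); rewrite -bin_ffact leq_pmulr //.
exact: fact_gt0.
Qed.

Lemma bin_ratio r m h : (r - h) ^ h * 'C(m, h) <= 'C(r, h) * m ^ h.
Proof.
rewrite -(leq_pmul2r (fact_gt0 h)) -mulnA bin_ffact mulnAC bin_ffact.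
apply: leq_mul; [exact: exp_le_ffact | exact: ffact_le_exp].
Qed.

Local Open Scope R_scope.
Lemma INR_expn a b : INR (a ^ b)%N = INR a ^ b.
Proof. elim: b => [|b IH] //=; by rewrite expnS -multE mult_INR IH. Qed.

Lemma INR_muln a b : INR (a * b)%N = INR a * INR b.
Proof. by rewrite -multE mult_INR. Qed.

Lemma INR_addn a b : INR (a + b)%N = INR a + INR b.
Proof. by rewrite -plusE plus_INR. Qed.

Lemma INR_leq a b : (a <= b)%N -> INR a <= INR b.
Proof. by move/leP; apply: le_INR. Qed.

Definition dbox d (B : box d) (x : point d) : box d.
Proof.
refine {| lo := fun i => x i - hi B i; hi := fun i => x i - lo B i; lo_le_hi := _ |}.
move=> i; have := lo_le_hi B i; lra.
Defined.

Lemma in_dbox d (B : box d) x y : in_box (dbox B x) y <-> in_translate B y x.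
Proof. split=> H i; have := H i; rewrite /=; lra. Qed.

Lemma colorful d n h (Hh : hc_property d n h) (B : box d) m (p : 'I_m -> point d)
  (A : 'I_h -> {set 'I_m}) :
  (forall i, ~ coverable n B p (A i)) ->
  exists x : 'I_h -> 'I_m, (forall i, x i \in A i) /\ ~ coverable n B p [set x i | i : 'I_h].
Proof.
move=> HA; apply: NNPP => Hno.
have [_ H] := Hh.
pose F := fun i C => exists y, y \in A i /\ C = dbox B (p y).
have [i [q Hq]] : exists i, pierceable n (F i).
  apply: H => c Hc.
  have /fin_all_exists[x Hx] : forall i, exists y : 'I_m, y \in A i /\ c i = dbox B (p y).
    move=> i; exact: Hc i.
  have Hcov : coverable n B p [set x i | i : 'I_h].
    apply: NNPP => Hn; apply: Hno; exists x; split => // i; by case: (Hx i).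
  case: Hcov => t Ht; exists t => C [i ->]; case: (Hx i) => _ ->.
  have [j Hj] := Ht (x i) (ltac:(by apply/imsetP; exists i)); exists j; exact/in_dbox.
apply: (HA i); exists q => y Hy.
have [j Hj] := Hq (dbox B (p y)) (ex_intro _ y (conj Hy erefl)).
exists j; exact/in_dbox.
Qed.

Section Comb.
Variables (d n h : nat) (Hh : hc_property d n h) (B : box d) (m : nat) (p : 'I_m -> point d).
Variable eps : R.
Hypothesis Hu : forall t : 'I_n -> point d, eps * INR m <= INR (n_uncovered B p t).

Lemma cov_sub (E E' : {set 'I_m}) : E \subset E' -> coverable n B p E' -> coverable n B p E.
Proof. move=> /subsetP HE [t Ht]; exists t => i Hi; exact: Ht (HE _ Hi). Qed.

Lemma robust (R0 : {set 'I_m}) : INR #|R0| < eps * INR m -> ~ coverable n B p (~: R0).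
Proof.
move=> HR [t Ht].
have : (n_uncovered B p t <= #|R0|)%N.
  rewrite /n_uncovered; apply: subset_leq_card; apply/subsetP => i.
  rewrite inE => /asboolP Hn.
  case: (boolP (i \in R0)) => // HiR; exfalso; apply: Hn; apply: Ht; by rewrite inE HiR.
move/INR_leq; have := Hu t; lra.
Qed.

Lemma helly (A : {set 'I_m}) : ~ coverable n B p A ->
  exists E : {set 'I_m}, E \subset A /\ (#|E| <= h)%N /\ ~ coverable n B p E.
Proof.
move=> HA; have [x [Hx Hc]] := colorful Hh (A := fun _ => A) (fun _ => HA).
exists [set x i | i : 'I_h]; split; last split => //.
  by apply/subsetP => y /imsetP [i _ ->].
by apply: leq_trans (leq_imset_card _ _) _; rewrite card_ord.
Qed.

Lemma extend k (E : {set 'I_m}) : (#|E| + k = h)%N -> (h <= m)%N ->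
  exists E' : {set 'I_m}, E \subset E' /\ #|E'| = h.
Proof.
elim: k E => [|k IH] E HE Hhm; first by exists E; rewrite addn0 in HE.
have : (0 < #|~: E|)%N.
  have := cardsC E; rewrite card_ord => HC; rewrite -HC in Hhm; lia.
case/card_gt0P => y; rewrite inE => Hy.
have [E' [H1 H2]] := IH (y |: E) ltac:(rewrite cardsU1 Hy; lia) Hhm.
exists E'; split => //; apply: subset_trans H1; exact: subsetUr.
Qed.

Lemma greedy r : INR (r * h) < eps * INR m ->
  exists (Bk : nat -> {set 'I_m}) (U : {set 'I_m}), (#|U| <= r * h)%N /\
    (forall j, (j < r)%N -> Bk j \subset U /\ ~ coverable n B p (Bk j)) /\
    (forall j j', (j < r)%N -> (j' < r)%N -> j <> j' -> [disjoint Bk j & Bk j']).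
Proof.
elim: r => [|r IH] Hr.
  exists (fun _ => set0), set0; split; first by rewrite cards0.
  by split.
have Hr' : INR (r * h) < eps * INR m.
  apply: Rle_lt_trans Hr; apply: INR_leq; rewrite mulSn; exact: leq_addl.
have [Bk [U [HU [HB HD]]]] := IH Hr'.
have [E [HE1 [HE2 HE3]]] := helly (robust (Rle_lt_trans _ _ _ (INR_leq HU) Hr')).
have HdE : forall j, (j < r)%N -> [disjoint E & Bk j].
  move=> j Hj; rewrite disjoints_subset; apply: subset_trans HE1 _.
  rewrite setCS; by case: (HB j Hj).
exists (fun j => if j == r then E else Bk j), (E :|: U); split.
  apply: leq_trans (leq_card_setU _ _).1 _; rewrite mulSn; exact: leq_add.
split.
  move=> j Hj; case: eqP => [_|/eqP Hne]; first by split => //; exact: subsetUl.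
  have Hj' : (j < r)%N by rewrite ltn_neqAle Hne -ltnS.
  case: (HB j Hj') => H1 H2; split => //; apply: subset_trans H1 _; exact: subsetUr.
move=> j j' Hj Hj' Hne.
case: (j =P r) => [Hj1|/eqP Hne1]; case: (j' =P r) => [Hjr|/eqP Hne2].
- by exfalso; apply: Hne; rewrite Hj1 Hjr.
- apply: HdE; by rewrite ltn_neqAle Hne2 -ltnS.
- rewrite disjoint_sym; apply: HdE; by rewrite ltn_neqAle Hne1 -ltnS.
- apply: HD => //; [by rewrite ltn_neqAle Hne1 -ltnS | by rewrite ltn_neqAle Hne2 -ltnS].
Qed.

Definition Bad := [set E : {set 'I_m} | (#|E| == h) && ~~ `[< coverable n B p E >]].

Lemma count_bad r (Bk : nat -> {set 'I_m}) :
  (forall j, (j < r)%N -> ~ coverable n B p (Bk j)) ->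
  (forall j j', (j < r)%N -> (j' < r)%N -> j <> j' -> [disjoint Bk j & Bk j']) ->
  ('C(r, h) <= #|Bad|)%N.
Proof.
move=> HBk Hdis.
pose g := fun E : {set 'I_m} => [set j : 'I_r | ~~ [disjoint E & Bk j]].
rewrite -[r in 'C(r, _)]card_ord -card_draws.
apply: leq_trans (leq_imset_card g Bad); apply: subset_leq_card; apply/subsetP => J.
rewrite inE => /eqP HJ.
pose s := [seq val j | j <- enum J].
have Hs : size s = h by rewrite size_map -cardE HJ.
have Hus : uniq s by rewrite (map_inj_uniq val_inj) enum_uniq.
have Har : forall i : 'I_h, (nth 0%N s i < r)%N.
  move=> i; have : nth 0%N s i \in s by rewrite mem_nth // Hs.
  by case/mapP => j _ ->; exact: ltn_ord.
have [x [Hx Hcov]] := colorful Hh (A := fun i : 'I_h => Bk (nth 0%N s i)) (fun i => HBk _ (Har i)).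
have Hblk : forall (i : 'I_h) (j : nat), (j < r)%N -> x i \in Bk j -> j = nth 0%N s i.
  move=> i j Hj Hxj; apply: NNPP => Hne.
  have := disjointFr (Hdis _ _ Hj (Har i) Hne) Hxj; by rewrite Hx.
have Hinj : injective x.
  move=> i i' Hii'.
  have H1 := Hblk i' _ (Har i) ltac:(rewrite -Hii'; exact: Hx).
  apply: val_inj; apply/eqP; rewrite -(nth_uniq 0%N _ _ Hus) ?Hs ?ltn_ord //.
  change (nth 0%N s i == nth 0%N s i'); by rewrite H1.
apply/imsetP; exists [set x i | i : 'I_h].
  rewrite inE card_imset // card_ord eqxx /=; exact/asboolPn.
apply/esym/setP => j; rewrite inE; apply/idP/idP.
  rewrite -setI_eq0 => /set0Pn [y]; rewrite inE => /andP [/imsetP [i _ ->] Hxj].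
  have Hj := Hblk i j (ltn_ord j) Hxj.
  have : nth 0%N s i \in s by rewrite mem_nth // Hs.
  case/mapP => j0 Hj0 Heq.
  have -> : j = j0 by apply: val_inj; change (nat_of_ord j = nat_of_ord j0); rewrite Hj Heq.
  by rewrite -mem_enum.
move=> HjJ; have Hjs : val j \in s by apply/mapP; exists j; rewrite ?mem_enum.
have Hi0 : (index (val j) s < h)%N by rewrite -Hs index_mem.
rewrite -setI_eq0; apply/set0Pn; exists (x (Ordinal Hi0)); rewrite inE; apply/andP; split.
  by apply/imsetP; exists (Ordinal Hi0).
by have := Hx (Ordinal Hi0); rewrite /= nth_index.
Qed.

Lemma one_bad : (h <= m)%N -> 0 < eps * INR m -> (0 < #|Bad|)%N.
Proof.
move=> Hhm Hem.
have H0 : INR #|(set0 : {set 'I_m})| < eps * INR m by rewrite cards0 /=.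
have [E [_ [HE1 HE2]]] := helly (robust H0).
have [E' [H1 H2]] := @extend (h - #|E|)%N E ltac:(lia) Hhm.
apply/card_gt0P; exists E'; rewrite inE H2 eqxx /=; apply/asboolPn => Hc.
by apply: HE2; apply: cov_sub H1 Hc.
Qed.

End Comb.

Lemma floor_nat x : 0 <= x -> exists r : nat, INR r <= x < INR r + 1.
Proof.
move=> Hx; have [H1 H2] := base_Int_part x.
have Hz : (0 <= Int_part x)%Z.
  have : (-1 < Int_part x)%Z by apply: lt_IZR; rewrite /=; lra.
  lia.
exists (Z.to_nat (Int_part x)); rewrite INR_IZR_INZ Z2Nat.id //; lra.
Qed.

Lemma INR_subn a b : (b <= a)%N -> INR (a - b) = INR a - INR b.
Proof. by move=> /leP H; rewrite -minusE minus_INR. Qed.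

Lemma pow_exp_bound (q g : R) (k : nat) (delta : R) :
  0 < g -> 0 <= q <= 1 - g -> 0 < delta <= 1 -> / g * ln (/ delta) <= INR k ->
  q ^ k <= delta.
Proof.
move=> Hg Hq Hd Hk.
have H1 : q ^ k <= (1 - g) ^ k by apply: pow_incr; lra.
have H2 : (1 - g) ^ k <= exp (- g) ^ k.
  apply: pow_incr; have := exp_ineq1_le (- g); lra.
have H3 : forall k0 : nat, exp (- g) ^ k0 = exp (- g * INR k0).
  elim => [|k0 IH]; first by rewrite /= Rmult_0_r exp_0.
  by rewrite -tech_pow_Rmult IH -exp_plus S_INR; congr exp; ring.
have H4 : ln (/ delta) <= g * INR k.
  have := Rmult_le_compat_l g _ _ (Rlt_le _ _ Hg) Hk.
  by rewrite -Rmult_assoc Rinv_r ?Rmult_1_l //; lra.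
rewrite ln_Rinv in H4; last lra.
have H5 : exp (- g * INR k) <= exp (ln delta).
  case: (Req_dec (- g * INR k) (ln delta)) => [->|Hne]; first lra.
  apply: Rlt_le; apply: exp_increasing; lra.
rewrite exp_ln in H5; last lra.
rewrite H3 in H2; lra.
Qed.

Lemma ratio d n h (Hh : hc_property d n h) (B : box d) m (p : 'I_m -> point d) eps :
  0 < eps <= 1 ->
  (forall t : 'I_n -> point d, eps * INR m <= INR (n_uncovered B p t)) ->
  (h <= m)%N ->
  (eps / (4 * INR h * (INR h + 1))) ^ h * INR 'C(m, h) <= INR #|Bad n h B p|.
Proof.
move=> Heps Hu Hhm.
have Hh0 : (0 < h)%N := Hh.1.
have HH : 1 <= INR h by have := INR_leq Hh0.
have Hm : 1 <= INR m by have := INR_leq (leq_trans Hh0 Hhm).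
set H := INR h in HH *.
set a := eps / (4 * H * (H + 1)).
have Ha : 0 < a by rewrite /a; apply: Rdiv_lt_0_compat; nra.
set X := eps * INR m.
have HX0 : 0 < X by rewrite /X; nra.
have HN : INR 'C(m, h) <= INR m ^ h by rewrite -INR_expn; apply: INR_leq; apply: bin_le_exp.
have HN0 : 0 <= INR 'C(m, h) := pos_INR _.
have Hid : (a * INR m) * (4 * H * (H + 1)) = X by rewrite /a /X; field; lra.
have Ham : 0 < a * INR m by nra.
have Hpow : a ^ h * INR 'C(m, h) <= (a * INR m) ^ h.
  rewrite Rpow_mult_distr; apply: Rmult_le_compat_l => //; apply: pow_le; lra.
case: (Rlt_or_le X (4 * H * (H + 1))) => HX.
  have Ham1 : a * INR m <= 1.
    apply: Rlt_le; apply: (Rmult_lt_reg_r (4 * H * (H + 1))); first nra.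
    by rewrite Hid Rmult_1_l.
  have Hb := INR_leq (one_bad Hh Hu Hhm HX0).
  have : (a * INR m) ^ h <= 1 ^ h by apply: pow_incr; lra.
  rewrite pow1 /= in Hb * => H1; lra.
have [r [Hr1 Hr2]] := floor_nat (x := X / (2 * H)) ltac:(apply: Rlt_le; apply: Rdiv_lt_0_compat; lra).
have Hr1' : INR r * (2 * H) <= X.
  have := Rmult_le_compat_r (2 * H) _ _ ltac:(lra) Hr1.
  by rewrite /Rdiv Rmult_assoc Rinv_l ?Rmult_1_r //; lra.
have Hr2' : X < (INR r + 1) * (2 * H).
  have := Rmult_lt_compat_r (2 * H) _ _ ltac:(lra) Hr2.
  by rewrite /Rdiv Rmult_assoc Rinv_l ?Rmult_1_r //; lra.
have Hrh : INR (r * h) < X.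
  rewrite INR_muln -/H.
  have : INR r * (2 * H) = 2 * (INR r * H) by ring.
  have : 0 <= INR r * H by apply: Rmult_le_pos; [exact: pos_INR | lra].
  lra.
have [Bk [U [_ [HB HD]]]] := greedy Hh Hu Hrh.
have Hcb := count_bad Hh (r := r) (Bk := Bk) (fun j Hj => (HB j Hj).2) HD.
have Hrat := bin_ratio r m h.
set Y := a * INR m * (4 * H).
have HY : Y * (H + 1) = X by rewrite -Hid /Y; ring.
have HY0 : 0 <= Y * H by rewrite /Y; apply: Rmult_le_pos; nra.
have HYX : Y <= X.
  have : Y * (H + 1) = Y * H + Y by ring.
  lra.
have Hkey : (INR r - H) * (4 * H) >= X.
  have : (INR r + 1) * (2 * H) = 2 * (INR r * H) + 2 * H by ring.
  have : (INR r - H) * (4 * H) = 4 * (INR r * H) - 4 * (H * H) by ring.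
  have : 4 * H * (H + 1) = 4 * (H * H) + 4 * H by ring.
  lra.
have Hram : a * INR m <= INR r - H.
  apply: (Rmult_le_reg_r (4 * H)); first lra.
  rewrite /Y in HYX; lra.
have Hhr : (h <= r)%N.
  apply/leP; apply: INR_le; rewrite -/H; lra.
have Hsub : INR (r - h) = INR r - H by rewrite INR_subn.
have Hp2 : (a * INR m) ^ h <= INR (r - h) ^ h by apply: pow_incr; lra.
have Hint : INR (r - h) ^ h * INR 'C(m, h) <= INR #|Bad n h B p| * INR m ^ h.
  rewrite -!INR_expn -!INR_muln; apply: INR_leq.
  apply: leq_trans Hrat _; exact: leq_mul.
have Hmh : 0 < INR m ^ h by apply: pow_lt; lra.
apply: (Rmult_le_reg_r (INR m ^ h)) => //.
have : a ^ h * INR 'C(m, h) * INR m ^ h = (a * INR m) ^ h * INR 'C(m, h).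
  by rewrite Rpow_mult_distr; ring.
move=> ->.
apply: Rle_trans Hint.
by apply: Rmult_le_compat_r.
Qed.

Lemma prob_formula d n (B : box d) m (p : 'I_m -> point d) k h :
  (h <= m)%N ->
  prob_some_uncoverable n B p k h = 1 - (1 - INR #|Bad n h B p| / INR 'C(m, h)) ^ k.
Proof.
move=> Hhm.
pose Hset := [set E : {set 'I_m} | #|E| == h].
pose C := [set E : {set 'I_m} | `[< coverable n B p E >]].
pose Good := Hset :&: C.
have HN : #|Hset| = 'C(m, h) by rewrite card_draws card_ord.
have HBad : Bad n h B p = Hset :\: C by apply/setP => E; rewrite !inE andbC.
have HGB : (#|Good| + #|Bad n h B p| = 'C(m, h))%N by rewrite HBad cardsID HN.
have Hs : #|samples k h m| = ('C(m, h) ^ k)%N.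
  rewrite -HN -[k in (_ ^ k)%N]card_ord -card_ffun_on; apply: eq_card => w.
  rewrite inE; apply/forallP/ffun_onP => Hw j; [by rewrite inE Hw | by have := Hw j; rewrite inE].
pose Goodw := [set w : {ffun 'I_k -> {set 'I_m}} | [forall j, w j \in Good]].
have HGw : #|Goodw| = (#|Good| ^ k)%N.
  rewrite -[k in (_ ^ k)%N]card_ord -card_ffun_on; apply: eq_card => w.
  rewrite inE; apply/forallP/ffun_onP => Hw j; exact: Hw j.
have HGs : Goodw \subset samples k h m.
  apply/subsetP => w; rewrite !inE => /forallP Hw; apply/forallP => j.
  by have := Hw j; rewrite !inE => /andP [].
have HEv : [set w in samples k h m | `[< exists j, ~ coverable n B p (w j) >]]
           = samples k h m :\: Goodw.
  apply/setP => w; rewrite !inE.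
  case: (boolP [forall j, #|w j| == h]) => Hall; rewrite ?andbF ?andbT //.
  apply/idP/idP.
    move/asboolP => [j Hj]; apply/forallPn; exists j; rewrite !inE.
    by apply/negP => /andP [_ /asboolP].
  move/forallPn => [j]; rewrite !inE (forallP Hall j) /= => /asboolPn Hc.
  by apply/asboolP; exists j.
have Hcount := cardsID Goodw (samples k h m).
rewrite (setIidPr HGs) HGw Hs in Hcount.
rewrite /prob_some_uncoverable HEv Hs.
have HN0 : (0 < 'C(m, h))%N by rewrite bin_gt0.
have HNr : 0 < INR 'C(m, h) by apply: lt_0_INR; apply/ltP.
have -> : INR #|samples k h m :\: Goodw| = INR ('C(m, h) ^ k) - INR (#|Good| ^ k).
  rewrite -Hcount INR_addn; rewrite [X in _ = X - _]Rplus_comm /Rminus Rplus_assoc Rplus_opp_r Rplus_0_r; reflexivity.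
have HG : INR #|Good| = INR 'C(m, h) - INR #|Bad n h B p| by rewrite -HGB INR_addn; ring.
rewrite !INR_expn HG.
have -> : 1 - INR #|Bad n h B p| / INR 'C(m, h) = (INR 'C(m, h) - INR #|Bad n h B p|) * / INR 'C(m, h).
  by field; lra.
rewrite Rpow_mult_distr pow_inv; field.
by apply: pow_nonzero; lra.
Qed.

Theorem theorem12 :
  forall (d n hc : nat), is_hc d n hc ->
  forall eps : R, (0 < eps <= 1) ->
  exists gamma : R, (0 < gamma) /\
    forall (B : box d) (m : nat) (p : 'I_m -> point d),
      injective p -> (hc <= m)%N ->
      (forall t : 'I_n -> point d, (eps * INR m <= INR (n_uncovered B p t))) ->
      forall delta : R, (0 < delta <= 1) ->
      forall k : nat, (/ gamma * ln (/ delta) <= INR k) ->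
        (1 - delta <= prob_some_uncoverable n B p k hc).
Proof.
move=> d n hc Hhc eps Heps.
have Hh := Hhc.1.
have Hh0 : (0 < hc)%N := Hh.1.
have HH : 1 <= INR hc by have := INR_leq Hh0.
exists ((eps / (4 * INR hc * (INR hc + 1))) ^ hc); split.
  apply: pow_lt; apply: Rdiv_lt_0_compat; nra.
move=> B m p _ Hhm Hu delta Hdelta k Hk.
rewrite prob_formula //.
have Hr := ratio Hh Heps Hu Hhm.
set g := (eps / (4 * INR hc * (INR hc + 1))) ^ hc in Hk Hr *.
have Hg : 0 < g by rewrite /g; apply: pow_lt; apply: Rdiv_lt_0_compat; nra.
have HN0 : (0 < 'C(m, hc))%N by rewrite bin_gt0.
have HN : 0 < INR 'C(m, hc) by apply: lt_0_INR; apply/ltP.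
have Hb : INR #|Bad n hc B p| <= INR 'C(m, hc).
  apply: INR_leq; rewrite -[m in 'C(m, _)]card_ord -card_draws.
  by apply: subset_leq_card; apply/subsetP => E; rewrite !inE => /andP [].
have Hq1 : INR #|Bad n hc B p| / INR 'C(m, hc) <= 1.
  apply: (Rmult_le_reg_r (INR 'C(m, hc))) => //.
  rewrite /Rdiv Rmult_assoc Rinv_l; lra.
have Hq2 : g <= INR #|Bad n hc B p| / INR 'C(m, hc).
  apply: (Rmult_le_reg_r (INR 'C(m, hc))) => //.
  rewrite /Rdiv Rmult_assoc Rinv_l; lra.
have := pow_exp_bound (q := 1 - INR #|Bad n hc B p| / INR 'C(m, hc)) Hg ltac:(lra) Hdelta Hk.
lra.
Qed.
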